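(* Let $L:\mathbb{R}\to[1,\infty)$ be given by $L(x):=1/\mathbf{P}(\sigma_0>x)$ for a strictly positive random variable $\sigma_0$, and suppose $L$ is slowly varying at infinity, i.e. $\lim_{u\to\infty}L(uv)/L(u)=1$ for every $v>0$. Let $\varepsilon>\varepsilon'>0$ and let $x_t,y_t$ be non-decreasing functions of $t$ with $x_t,y_t\to\infty$. Then there exists $t'>0$ such that \[ \{t>t': L(x_t)>(1+\varepsilon)L(y_t)\}\subseteq\{t>t': L(x_t-y_t)>(1+\varepsilon')L(y_t)\}.\] *)

(* Defs.v *)
From HB Require Import structures.
From mathcomp Require Import all_boot all_order all_algebra.
From mathcomp Require Import all_classical all_reals all_analysis.
Set Implicit Arguments. Unset Strict Implicit. Unset Printing Implicit Defensive.
Import Order.TTheory GRing.Theory Num.Theory numFieldNormedType.Exports.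
Local Open Scope classical_set_scope.
Local Open Scope ring_scope.

Definition Ltail d (T : measurableType d) (R : realType) (P : probability T R)
  (sigma0 : {RV P >-> R}) (x : R) : R :=
  (fine (P [set w | x < sigma0 w]))^-1.

Definition slowly_varying (R : realType) (L : R -> R) : Prop :=
  forall v : R, 0 < v -> (L (u * v) / L u) @[u --> +oo] --> (1 : R).

(* Main.v *)
Require Import Defs.
From HB Require Import structures.
From mathcomp Require Import all_boot all_order all_algebra.
From mathcomp Require Import all_classical all_reals all_analysis.
Import Order.TTheory GRing.Theory Num.Theory numFieldNormedType.Exports.
Local Open Scope classical_set_scope.
Local Open Scope ring_scope.
Section S.
Context (d : measure_display) (T : measurableType d) (R : realType)
  (P : probability T R) (sigma0 : {RV P >-> R}).
Lemma mset a : measurable [set w | a < sigma0 w].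
Proof.
have H := @measurable_funP _ _ _ _ setT sigma0 measurableT _ (@measurable_itv R `]a, +oo[).
rewrite setTI in H.
have -> : [set w | a < sigma0 w] = sigma0 @^-1` `]a, +oo[%classic.
  by apply/seteqP; split=> w /=; rewrite in_itv /= andbT.
exact: H.
Qed.
Hypothesis tail_pos : forall x : R, (0 < P [set w | (x < sigma0 w)%R])%E.
Lemma fine_pos a : 0 < fine (P [set w | a < sigma0 w]).
Proof.
apply: fine_gt0; rewrite tail_pos /=.
by rewrite (le_lt_trans (probability_le1 _ (mset a))) ?ltry.
Qed.
Lemma Lpos a : 0 < Ltail sigma0 a.
Proof. by rewrite /Ltail invr_gt0 fine_pos. Qed.

Lemma Lmono a b : a <= b -> Ltail sigma0 a <= Ltail sigma0 b.
Proof.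
move=> ab; rewrite /Ltail lef_pV2 ?posrE ?fine_pos //.
apply: fine_le; rewrite ?fin_num_measure //; try exact: mset.
have H := @le_measure _ _ _ P _ _ (mem_set (mset b)) (mem_set (mset a)).
have H2 := H (fun w (hw : b < sigma0 w) => le_lt_trans ab hw). exact: H2.
Qed.
End S.

From mathcomp Require Import lra.

Theorem lemma3p3 (d : measure_display) (T : measurableType d) (R : realType)
  (P : probability T R) (sigma0 : {RV P >-> R})
  (sigma0_pos : forall w, 0 < sigma0 w)
  (tail_pos : forall x : R, (0 < P [set w | (x < sigma0 w)%R])%E)
  (HL : slowly_varying (Ltail sigma0))
  (eps eps' : R) (heps' : 0 < eps') (heps : eps' < eps)
  (x y : R -> R)
  (hx : {homo x : s t / s <= t}) (hy : {homo y : s t / s <= t})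
  (hxoo : x t @[t --> +oo] --> +oo) (hyoo : y t @[t --> +oo] --> +oo) :
  exists t' : R, 0 < t' /\
    [set t | t' < t /\ (1 + eps) * Ltail sigma0 (y t) < Ltail sigma0 (x t)]
    `<=` [set t | t' < t /\
           (1 + eps') * Ltail sigma0 (y t) < Ltail sigma0 (x t - y t)].
Proof.
set L := Ltail sigma0.
set c := (1 + eps') / (1 + eps).
have e0 : 0 < 1 + eps by lra.
have c1 : c < 1 by rewrite /c ltr_pdivrMr //; lra.
have c0 : 0 < c by rewrite /c divr_gt0 //; lra.
have ce : c * (1 + eps) = 1 + eps' by rewrite /c mulfVK //; lra.
have E1 : \forall u \near +oo, c < L (u * 2^-1) / L u.
  by apply: (cvgr_gt 1) => //; apply: HL; rewrite invr_gt0.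
have E2 := hxoo _ E1.
case: E2 => M [Mr HM].
exists (Num.max M 1); split; first by rewrite lt_max ltr01 orbT.
move=> t [tM H]; split => //.
have tM1 : M < t by move: tM; rewrite gt_max => /andP[].
have := HM t tM1; rewrite /=.
have LP := @Lpos _ _ _ P sigma0 tail_pos.
rewrite ltr_pdivlMr // => Hc.
have Hc2 : c * ((1 + eps) * L (y t)) < c * L (x t) by rewrite ltr_pM2l.
rewrite mulrA ce in Hc2.
have ly := LP (y t).
case: (leP (y t) (x t * 2^-1)) => hyx.
  have : L (x t * 2^-1) <= L (x t - y t) by apply: (@Lmono _ _ _ P sigma0 tail_pos); lra.
  lra.
have : L (x t * 2^-1) <= L (y t) by apply: (@Lmono _ _ _ P sigma0 tail_pos); lra.
have : 0 < eps' * L (y t) by rewrite mulr_gt0.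
lra.
Qed.
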